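(* Let $\pi$ be a uniformizer of $K_P$ and $L/K_P$ a finite extension. The $\pi$-adic $1$-unit character $\langle\cdot\rangle_\pi:K_P^+\to U_P$ extends uniquely to a character $\langle\cdot\rangle_\pi\in\mathbf{S}_L$ (i.e. a character of $L^+$ in $\mathbf{S}_L$ whose restriction to $K_P^+$ is $\langle\cdot\rangle_\pi$) taking values in $U_{\mathbb{C}_P}$.
   Context: $P$ is a closed point of a smooth projective curve over a finite field of characteristic $p$, $K_P$ its completed function field with valuation $v_P$, $\mathbb{C}_P$ the completion of an algebraic closure of $K_P$. For a complete extension $L$, $L^+=L^\times/\mu_L$ ($\mu_L$ = roots of unity in $L$), $U_L$ the $1$-units of $L$, and $U_P=U_{K_P}$. The $\pi$-adic $1$-unit character is $\langle\alpha\rangle_\pi=\alpha/\pi^{v_P(\alpha)}\in U_P$ for $\alpha\in K_P^+$ (well defined on positive numbers). $\mathbf{S}_L$ is the group of homomorphisms $s:L^+\to\mathbb{C}_P^\times$ for which there exists $y(s)\in\mathbb{Z}_p$ with $s(u)=u^{y(s)}$ for all $u\in U_L$. *)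

(* Defs.v *)
From HB Require Import structures.
From mathcomp Require Import all_boot all_order all_algebra.
From mathcomp Require Import reals.
Set Implicit Arguments. Unset Strict Implicit. Unset Printing Implicit Defensive.
Import Order.TTheory GRing.Theory Num.Theory.
Local Open Scope ring_scope.

Section Defs.
Variables (R : realType) (C : fieldType) (abs : C -> R).

Definition nonarch_abs : Prop :=
  [/\ forall x, 0 <= abs x,
      forall x, abs x = 0 <-> x = 0,
      forall x y, abs (x * y) = abs x * abs y
    & forall x y, abs (x + y) <= Num.max (abs x) (abs y)].

Definition cauchy (u : nat -> C) : Prop :=
  forall e : R, 0 < e -> exists N, forall m n, (N <= m)%N -> (N <= n)%N ->
    abs (u m - u n) < e.

Definition converges_to (u : nat -> C) (l : C) : Prop :=
  forall e : R, 0 < e -> exists N, forall n, (N <= n)%N -> abs (u n - l) < e.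

Definition complete_in (S : {pred C}) : Prop :=
  forall u : nat -> C, (forall n, u n \in S) -> cauchy u ->
    exists2 l, l \in S & converges_to u l.

Definition is_subfield (S : {pred C}) : Prop :=
  0 \in S /\ 1 \in S /\
  (forall x y, x \in S -> y \in S -> x + y \in S) /\
  (forall x, x \in S -> - x \in S) /\
  (forall x y, x \in S -> y \in S -> x * y \in S) /\
  (forall x, x \in S -> x != 0 -> x^-1 \in S).

(* K is a local field of characteristic p (a completed function field K_P)
   for abs, with uniformizer pi *)
Definition local_field_with_unif (K : {pred C}) (pi : C) : Prop :=
  is_subfield K /\ complete_in K /\ pi \in K /\ 0 < abs pi /\ abs pi < 1 /\
  (forall x, x \in K -> x != 0 -> exists n : int, abs x = abs pi ^ n) /\
  (* finite residue field *)
  (exists s : seq C, (forall r, r \in s -> (r \in K) /\ abs r <= 1) /\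
     forall x, x \in K -> abs x <= 1 -> exists2 r, r \in s & abs (x - r) < 1).

Definition algebraic_over (K : {pred C}) (z : C) : Prop :=
  exists q : {poly C}, [/\ q != 0, q \is a polyOver K & root q z].

(* C is (a model of) the completion of an algebraic closure of K:
   C is complete and the elements algebraic over K are dense in C
   (algebraic closedness of C is part of its type below). *)
Definition completed_alg_closure (K : {pred C}) : Prop :=
  complete_in predT /\
  forall z, exists u : nat -> C, (forall n, algebraic_over K (u n)) /\ converges_to u z.

Definition finite_ext (K L : {pred C}) : Prop :=
  [/\ is_subfield L, {subset K <= L}
    & exists b : seq C, (forall x, x \in b -> x \in L) /\
        forall x, x \in L -> exists k : nat -> C,
          (forall i, k i \in K) /\ x = \sum_(i < size b) k i * b`_i].

Definition root_of_unity_in (S : {pred C}) (z : C) : Prop :=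
  z \in S /\ exists n, (0 < n)%N /\ z ^+ n = 1.

Definition one_unit_in (S : {pred C}) (u : C) : Prop :=
  u \in S /\ abs (u - 1) < 1.

(* p-adic integers as compatible residue systems y n in [0, p^n) *)
Definition Zp_elt (p : nat) (y : nat -> nat) : Prop :=
  forall n, (y n < p ^ n)%N /\ (y n.+1 %% p ^ n = y n)%N.

Definition padic_pow_is (u : C) (y : nat -> nat) (w : C) : Prop :=
  converges_to (fun n => u ^+ y n) w.

(* s : C -> C represents a character L^+ = L^x / mu_L -> C^x *)
Definition char_Lplus (L : {pred C}) (s : C -> C) : Prop :=
  [/\ forall x, x \in L -> x != 0 -> s x != 0,
      forall x y, x \in L -> y \in L -> x != 0 -> y != 0 -> s (x * y) = s x * s y
    & forall z, root_of_unity_in L z -> s z = 1].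

Definition in_S (p : nat) (L : {pred C}) (s : C -> C) : Prop :=
  char_Lplus L s /\
  exists y, Zp_elt p y /\ forall u, one_unit_in L u -> padic_pow_is u y (s u).

(* s restricted to K^+ is the pi-adic 1-unit character:
   for alpha = pi^n * zeta * u with zeta in mu_K and u in U_K, s alpha = u
   (u = <alpha>_pi, the 1-unit part of alpha / pi^(v_P alpha)) *)
Definition extends_angle (K : {pred C}) (pi : C) (s : C -> C) : Prop :=
  forall (alpha : C) (n : int) (zeta u : C),
    alpha \in K -> root_of_unity_in K zeta -> one_unit_in K u ->
    alpha = pi ^ n * zeta * u -> s alpha = u.

Definition values_in_one_units (L : {pred C}) (s : C -> C) : Prop :=
  forall x, x \in L -> x != 0 -> abs (s x - 1) < 1.

End Defs.

(* Main.v *)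
Require Import Defs.
From HB Require Import structures.
From mathcomp Require Import all_boot all_order all_algebra.
From mathcomp Require Import reals boolp.
Import Order.TTheory GRing.Theory Num.Theory.
Local Open Scope ring_scope.

Section P.
Variables (R : realType) (C : closedFieldType) (abs : C -> R).
Hypothesis Habs : nonarch_abs abs.

Lemma abs_ge0 x : 0 <= abs x. Proof. by case: Habs. Qed.
Lemma abs_eq0 x : (abs x = 0) <-> x = 0. Proof. by case: Habs. Qed.
Lemma absM x y : abs (x * y) = abs x * abs y. Proof. by case: Habs. Qed.
Lemma absD x y : abs (x + y) <= Num.max (abs x) (abs y). Proof. by case: Habs. Qed.
Lemma abs_gt0 x : x != 0 -> 0 < abs x.
Proof. move=> hx; rewrite lt_def abs_ge0 andbT; apply/eqP => /abs_eq0 h; by rewrite h eqxx in hx. Qed.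
Lemma abs0 : abs 0 = 0. Proof. exact/abs_eq0. Qed.
Lemma abs1 : abs 1 = 1.
Proof.
have h : abs 1 * abs 1 = abs 1 * 1 by rewrite -absM mulr1 mulr1.
apply: (mulfI _ h); apply/eqP => /abs_eq0/eqP; by rewrite oner_eq0.
Qed.
Lemma absX x n : abs (x ^+ n) = abs x ^+ n.
Proof. elim: n => [|n IH]; by rewrite ?expr0 ?abs1 // !exprS absM IH. Qed.
Lemma absN1 : abs (-1) = 1.
Proof.
have h : abs (-1) ^+ 2 = 1 by rewrite -absX sqrrN expr1n abs1.
move/eqP: h; rewrite sqrf_eq1 => /orP [/eqP //|/eqP h].
have := abs_ge0 (-1); by rewrite h ler0N1.
Qed.
Lemma absN x : abs (- x) = abs x.
Proof. by rewrite -mulN1r absM absN1 mul1r. Qed.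
Lemma absB x y : abs (x - y) = abs (y - x).
Proof. by rewrite -absN opprB. Qed.
Lemma absV x : abs (x^-1) = (abs x)^-1.
Proof.
have [->|hx] := eqVneq x 0; first by rewrite invr0 abs0 invr0.
have h : abs x * abs x^-1 = 1 by rewrite -absM mulfV // abs1.
have hx0 : abs x != 0 by rewrite gt_eqF // abs_gt0.
apply: (mulfI hx0); by rewrite h mulfV.
Qed.
Lemma absD_lt x y e : abs x < e -> abs y < e -> abs (x + y) < e.
Proof. move=> h1 h2; apply: le_lt_trans (absD x y) _; by rewrite gt_max h1 h2. Qed.
Lemma absD_le x y e : abs x <= e -> abs y <= e -> abs (x + y) <= e.
Proof. move=> h1 h2; apply: le_trans (absD x y) _; by rewrite ge_max h1 h2. Qed.
Lemma abs_strict x y : abs y < abs x -> abs (x + y) = abs x.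
Proof.
move=> h; apply/eqP; rewrite eq_le; apply/andP; split.
  apply: le_trans (absD x y) _; rewrite ge_max lexx; exact: ltW.
have := absD (x + y) (- y); rewrite addrK absN => h2.
move: h2; rewrite le_max => /orP [//|h3].
by move: (le_lt_trans h3 h); rewrite ltxx.
Qed.
Lemma abs_sum_lt n (F : nat -> C) e : 0 < e -> (forall i, (i < n)%N -> abs (F i) < e) ->
  abs (\sum_(i < n) F i) < e.
Proof.
move=> e0; elim: n => [|n IH] h; first by rewrite big_ord0 abs0.
rewrite big_ord_recr /=; apply: absD_lt; last exact: h.
apply: IH => i hi; apply: h; exact: ltnW.
Qed.
Lemma abs_natr n : abs (n%:R : C) <= 1.
Proof.
elim: n => [|n IH]; first by rewrite abs0.
rewrite -addn1 natrD; apply: absD_le => //; by rewrite abs1.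
Qed.

Definition U (w : C) := abs (w - 1) < 1.

Lemma U_abs w : U w -> abs w = 1.
Proof. move=> h; have := @abs_strict 1 (w - 1); rewrite abs1 (addrC 1) subrK; by apply. Qed.
Lemma U_neq0 w : U w -> w != 0.
Proof. move=> /U_abs h; apply/eqP => h0; move: h; rewrite h0 abs0 => /eqP; by rewrite eq_sym oner_eq0. Qed.
Lemma U1 : U 1. Proof. by rewrite /U subrr abs0. Qed.
Lemma UM w v : U w -> U v -> U (w * v).
Proof.
move=> hw hv; rewrite /U.
have -> : w * v - 1 = w * (v - 1) + (w - 1) by rewrite mulrBr mulr1 addrA subrK.
apply: absD_lt => //; by rewrite absM U_abs // mul1r.
Qed.
Lemma UX w n : U w -> U (w ^+ n).
Proof. move=> h; elim: n => [|n IH]; by rewrite ?expr0 ?U1 // exprS UM. Qed.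
Lemma UV w : U w -> U w^-1.
Proof.
move=> h; rewrite /U.
have hw := U_neq0 w h.
have -> : w^-1 - 1 = - (w - 1) * w^-1 by rewrite mulNr mulrBl mulfV // mul1r opprB.
by rewrite absM absN absV (U_abs w h) invr1 mulr1.
Qed.

Lemma abs_exprz x (k : int) : abs (x ^ k) = abs x ^ k.
Proof.
case: k => n; first by rewrite -!exprnP absX.
by rewrite !NegzE -!exprnN absV absX.
Qed.


Variable p : nat.
Hypotheses (pp : prime p) (pc : p \in [pchar C]).

Lemma pnat_pj j : [pchar C].-nat (p ^ j)%N.
Proof. by rewrite pnatX (pnatE _ pp) pc. Qed.

Lemma frob_inj j (x y : C) : x ^+ (p ^ j) = y ^+ (p ^ j) -> x = y.
Proof.
move=> h; apply/eqP; rewrite -subr_eq0; apply/eqP.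
have : (x - y) ^+ (p ^ j) = 0.
  by rewrite exprDn_pchar ?pnat_pj // exprNn_pchar ?pnat_pj // h subrr.
by move/eqP; rewrite expf_eq0 => /andP [_ /eqP].
Qed.

Lemma abs_natr_cop m : ~~ (p %| m)%N -> abs (m%:R : C) = 1.
Proof.
move=> hm.
have h1 : (m%:R : C) ^+ p = m%:R.
  by rewrite -natrX -(GRing.natr_mod_pchar pc) fermat_little // GRing.natr_mod_pchar.
have hn : (m%:R : C) != 0 by rewrite -(dvdn_pcharf pc).
have ha : abs (m%:R : C) != 0 by rewrite gt_eqF // abs_gt0.
have hp : (0 < p.-1)%N by rewrite -subn1 subn_gt0 prime_gt1.
have h2 : abs (m%:R : C) ^+ p.-1 = 1.
  apply: (mulIf ha); rewrite mul1r -exprSr prednK ?prime_gt0 //.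
  by rewrite -absX h1.
apply/eqP; by rewrite -(pexpr_eq1 hp (abs_ge0 _)) h2.
Qed.

Lemma geo_abs t c : U t -> ~~ (p %| c)%N -> abs (\sum_(i < c) t ^+ i) = 1.
Proof.
move=> ht hc.
have -> : \sum_(i < c) t ^+ i = c%:R + \sum_(i < c) (t ^+ i - 1).
  by rewrite sumrB sumr_const card_ord addrCA subrr addr0.
rewrite abs_strict ?abs_natr_cop //.
apply: (@abs_sum_lt _ (fun i => t ^+ i - 1)) => // i _; exact: UX.
Qed.

Lemma U_root1 t N : U t -> (0 < N)%N -> t ^+ N = 1 -> t = 1.
Proof.
move=> ht hN.
have [c hc ->] := pfactor_coprime pp hN.
rewrite exprM => h0.
have hc1 : t ^+ c = 1 by apply: (@frob_inj (logn p N)); rewrite expr1n.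
have : (t - 1) * \sum_(i < c) t ^+ i = 0 by rewrite -subrX1 hc1 subrr.
move/eqP; rewrite mulf_eq0 => /orP [/eqP h|/eqP h].
  by apply/eqP; rewrite -subr_eq0; apply/eqP.
have : abs (\sum_(i < c) t ^+ i) = 1 by rewrite geo_abs // -prime_coprime.
by rewrite h abs0 => /eqP; rewrite eq_sym oner_eq0.
Qed.

Lemma U_root_uniq w w' N : U w -> U w' -> (0 < N)%N -> w ^+ N = w' ^+ N -> w = w'.
Proof.
move=> hw hw' hN h.
have hw'0 := U_neq0 w' hw'.
have ht : U (w / w') by apply: UM => //; exact: UV.
have : (w / w') ^+ N = 1 by rewrite exprMn exprVn h mulfV // expf_neq0.
move/(U_root1 _ _ ht hN) => h1.
by rewrite -[w](divfK hw'0) h1 mul1r.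
Qed.

Lemma prod_small (r : seq C) : abs (\prod_(z <- r) (1 - z)) < 1 -> exists2 z, z \in r & U z.
Proof.
elim: r => [|z r IH]; first by rewrite big_nil abs1 ltxx.
rewrite big_cons absM => h.
have [hz|hz] := ltP (abs (1 - z)) 1.
  by exists z; rewrite ?mem_head // /U absB.
have [hP|hP] := ltP (abs (\prod_(j <- r) (1 - j))) 1.
  by have [y hy hy2] := IH hP; exists y; rewrite // in_cons hy orbT.
have : 1 <= abs (1 - z) * abs (\prod_(j <- r) (1 - j)).
  have hP0 := lt_le_trans ltr01 hP.
  apply: le_trans hP _; by rewrite ler_pMl.
by rewrite leNgt h.
Qed.

Lemma U_root_exists u N : U u -> (0 < N)%N -> exists w, U w /\ w ^+ N = u.
Proof.
move=> hu hN.
have [r hr] := closed_field_poly_normal ('X^N - u%:P).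
move: hr; rewrite lead_coefXnsubC // scale1r => hr.
have h1 : ('X^N - u%:P).[1] = \prod_(z <- r) (1 - z).
  by rewrite hr horner_prod; apply: eq_bigr => z _; rewrite hornerXsubC.
have : abs (\prod_(z <- r) (1 - z)) < 1.
  by rewrite -h1 !hornerE expr1n absB.
move/prod_small => [z hz hUz]; exists z; split => //.
have : root ('X^N - u%:P) z by rewrite hr root_prod_XsubC.
by rewrite /root !hornerE subr_eq0 => /eqP.
Qed.


Variables (K L : {pred C}) (pi : C).
Hypotheses (HKf : is_subfield K) (HLf : is_subfield L) (HKL : {subset K <= L}).
Hypotheses (piK : pi \in K) (pi0 : 0 < abs pi) (pi1 : abs pi < 1).


Lemma sf0 (S : {pred C}) : is_subfield S -> 0 \in S. Proof. by case. Qed.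
Lemma sf1 (S : {pred C}) : is_subfield S -> 1 \in S. Proof. by case=> _ []. Qed.
Lemma sfD (S : {pred C}) x y : is_subfield S -> x \in S -> y \in S -> x + y \in S.
Proof. by case=> _ [] _ [] h _; apply: h. Qed.
Lemma sfN (S : {pred C}) x : is_subfield S -> x \in S -> - x \in S.
Proof. by case=> _ [] _ [] _ [] h _; apply: h. Qed.
Lemma sfM (S : {pred C}) x y : is_subfield S -> x \in S -> y \in S -> x * y \in S.
Proof. by case=> _ [] _ [] _ [] _ [] h _; apply: h. Qed.
Lemma sfV (S : {pred C}) x : is_subfield S -> x \in S -> x^-1 \in S.
Proof.
case=> h0 [] _ [] _ [] _ [] _ h hx; have [->|] := eqVneq x 0; first by rewrite invr0.
exact: h.
Qed.
Lemma sfX (S : {pred C}) x n : is_subfield S -> x \in S -> x ^+ n \in S.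
Proof. move=> hS hx; elim: n => [|n IH]; by rewrite ?expr0 ?sf1 // exprS sfM. Qed.
Lemma sfXz (S : {pred C}) x (n : int) : is_subfield S -> x \in S -> x ^ n \in S.
Proof.
move=> hS hx; case: n => n; first by rewrite -exprnP sfX.
by rewrite NegzE -exprnN sfV // sfX.
Qed.

Lemma pi_neq0 : pi != 0.
Proof. apply/eqP => h; move: pi0; by rewrite h abs0 ltxx. Qed.

Lemma abs_pi_z_eq1 (e : int) : abs pi ^ e = 1 -> e = 0.
Proof.
have hpi1 : abs pi != 1 by rewrite lt_eqF.
case: e => n.
  rewrite -exprnP => /eqP; case: n => [//|n]; by rewrite pexpr_eq1 // ?abs_ge0 // (negbTE hpi1).
rewrite NegzE -exprnN => /eqP; rewrite invr_eq1 pexpr_eq1 // ?abs_ge0 //.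
by rewrite (negbTE hpi1).
Qed.

Definition Q x w := U w /\ exists N (k : int), (0 < N)%N /\ x ^+ N = pi ^ k * w ^+ N.

Lemma Q_powM x N (k : int) w M : x ^+ N = pi ^ k * w ^+ N ->
  x ^+ (N * M) = pi ^ (k * M%:Z) * w ^+ (N * M).
Proof. move=> h; rewrite !exprM h exprMn; congr (_ * _); by rewrite exprnP exprz_exp. Qed.

Lemma Q_uniq x w w' : Q x w -> Q x w' -> w = w'.
Proof.
move=> [hw [N [k [hN hx]]]] [hw' [M [j [hM hy]]]].
have h1 := @Q_powM _ _ _ _ M hx; have h2 := @Q_powM _ _ _ _ N hy.
rewrite [(N * M)%N]mulnC h2 in h1.
have hw'0 := U_neq0 w' hw'.
have ht : U (w / w') by apply: UM => //; exact: UV.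
have hNM : (0 < M * N)%N by rewrite muln_gt0 hN hM.
have hB : w' ^+ (M * N) != 0 by exact: expf_neq0.
have hA : w ^+ (M * N) = pi ^ (- (k * M%:Z)) * (pi ^ (j * N%:Z) * w' ^+ (M * N)).
  by rewrite h1 mulrA -expfzDr ?pi_neq0 // addNr expr0z mul1r.
have he : (w / w') ^+ (M * N) = pi ^ (j * N%:Z - k * M%:Z).
  rewrite exprMn exprVn hA mulrA -expfzDr ?pi_neq0 // -mulrA mulfV // mulr1.
  by rewrite addrC.
have : abs pi ^ (j * N%:Z - k * M%:Z) = 1.
  by rewrite -abs_exprz -he absX (U_abs _ ht) expr1n.
move/abs_pi_z_eq1 => h0; rewrite h0 expr0z in he.
have := U_root1 _ _ ht hNM he => h3.
by rewrite -[w](divfK hw'0) h3 mul1r.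
Qed.

Lemma Q_mul x y w v : Q x w -> Q y v -> Q (x * y) (w * v).
Proof.
move=> [hw [N [k [hN hx]]]] [hv [M [j [hM hy]]]].
split; first exact: UM.
exists (N * M)%N, (k * M%:Z + j * N%:Z); split; first by rewrite muln_gt0 hN hM.
rewrite exprMn (@Q_powM _ _ _ _ M hx) mulnC (@Q_powM _ _ _ _ N hy) expfzDr ?pi_neq0 //.
rewrite mulnC exprMn; by rewrite mulrACA.
Qed.

Lemma Q_U u : U u -> Q u u.
Proof. move=> hu; split => //; exists 1%N, 0; by rewrite expr0z mul1r. Qed.

Lemma Q_root z m : (0 < m)%N -> z ^+ m = 1 -> Q z 1.
Proof. move=> hm hz; split; first exact: U1. exists m, 0; by rewrite expr0z mul1r expr1n. Qed.

Lemma Q_angle (n : int) zeta u m : (0 < m)%N -> zeta ^+ m = 1 -> U u -> Q (pi ^ n * zeta * u) u.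
Proof.
move=> hm hz hu; split => //; exists m, (n * m%:Z); split => //.
by rewrite !exprMn hz mulr1 exprnP exprz_exp.
Qed.

Definition sdef x : C :=
  match pselect (exists w, Q x w) with
  | left h => projT1 (cid h)
  | right _ => 1
  end.

Lemma sdefE x w : Q x w -> sdef x = w.
Proof.
move=> h; rewrite /sdef; case: pselect => [h'|h']; last by exfalso; apply: h'; exists w.
case: (cid h') => w' hw' /=; exact: Q_uniq hw' h.
Qed.


Lemma sf_sum (S : {pred C}) n (F : nat -> C) : is_subfield S -> (forall i, (i < n)%N -> F i \in S) ->
  \sum_(i < n) F i \in S.
Proof.
move=> hS; elim: n => [|n IH] hF; first by rewrite big_ord0 sf0.
rewrite big_ord_recr sfD // ?hF // IH // => i hi; apply: hF; exact: ltnW.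
Qed.

Definition span (b : seq C) x := exists k : nat -> C,
  (forall i, k i \in K) /\ x = \sum_(i < size b) k i * b`_i.

Lemma steinitz (b : seq C) : forall n (x : nat -> C), (size b < n)%N ->
  (forall i, (i < n)%N -> span b (x i)) ->
  exists c : nat -> C, [/\ forall i, c i \in K, exists2 i, (i < n)%N & c i != 0
                        & \sum_(i < n) c i * x i = 0].
Proof.
elim: b => [|b0 b IH] n x hn hx.
  exists (fun i => if i == 0%N then 1 else 0); split.
  - move=> i; case: (i == 0%N); [exact: sf1 | exact: sf0].
  - by exists 0%N => //; rewrite eqxx oner_eq0.
  - apply: big1 => i _; case: eqP => hi; last by rewrite mul0r.
    rewrite hi; have [k [_ ->]] := hx 0%N hn; by rewrite big_ord0 mulr0.
case: n hn hx => [//|n] hn hx.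
have hk : forall i, exists k : nat -> C, (i < n.+1)%N ->
    (forall j, k j \in K) /\ x i = \sum_(j < size (b0 :: b)) k j * (b0 :: b)`_j.
  move=> i; have [hi|hi] := boolP (i < n.+1)%N.
    have [k hk] := hx i hi; by exists k.
  by exists (fun _ => 0).
have [kf hkf] := choice hk.
set a := fun i => kf i 0%N.
have hxe : forall i, (i < n.+1)%N ->
    x i = a i * b0 + \sum_(j < size b) kf i j.+1 * b`_j.
  move=> i hi; have [_ ->] := hkf i hi; by rewrite big_ord_recl.
have haK : forall i, (i < n.+1)%N -> forall j, kf i j \in K by move=> i hi; case: (hkf i hi).
case: (pselect (exists2 i, (i < n.+1)%N & a i != 0)) => [[i0 hi0 ha0]|hna]; last first.
  apply: IH => //; first exact: ltnW.
  move=> i hi; exists (fun j => kf i j.+1); split => [j|]; first exact: haK.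
  rewrite hxe //; have -> : a i = 0.
    by apply/eqP; apply/negPn/negP => h; apply: hna; exists i.
  by rewrite mul0r add0r.
set r := fun i => a (bump i0 i) / a i0.
set x' := fun i => x (bump i0 i) - r i * x i0.
have hbump : forall i, (i < n)%N -> (bump i0 i < n.+1)%N.
  move=> i hi; rewrite /bump; case: (i0 <= i)%N; by rewrite ?add1n ?add0n // ltnW.
have hrK : forall i, (i < n)%N -> r i \in K.
  move=> i hi; apply: sfM => //; [exact: (haK _ (hbump _ hi) 0%N) | apply: sfV => //; exact: haK].
have [c' [hc'K [i1 hi1 hc'1] hc'0]] : exists c' : nat -> C,
    [/\ forall i, c' i \in K, exists2 i, (i < n)%N & c' i != 0
      & \sum_(i < n) c' i * x' i = 0].
  apply: IH => //.
  move=> i hi; exists (fun j => kf (bump i0 i) j.+1 - r i * kf i0 j.+1); split.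
    move=> j; apply: sfD => //; [exact: (haK _ (hbump _ hi) _) | apply: sfN => //; apply: sfM => //; [exact: hrK | exact: haK]].
  rewrite /x' (hxe _ (hbump _ hi)) (hxe _ hi0).
  have -> : r i * (a i0 * b0 + \sum_(j < size b) kf i0 j.+1 * b`_j) =
     a (bump i0 i) * b0 + \sum_(j < size b) r i * kf i0 j.+1 * b`_j.
    rewrite mulrDr mulr_sumr; congr (_ + _); last by apply: eq_bigr => j _; rewrite mulrA.
    by rewrite /r mulrA divfK.
  rewrite opprD addrACA subrr add0r -sumrB; apply: eq_bigr => j _; by rewrite mulrBl.
set c := fun j => if j == i0 then - \sum_(i < n) c' i * r i else c' (unbump i0 j).
exists c; split.
- move=> j; rewrite /c; case: (j == i0) => //.
  apply: sfN => //; apply: (@sf_sum _ _ (fun i => c' i * r i)) => // i hi.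
  apply: sfM => //; exact: hrK.
- exists (bump i0 i1); first exact: hbump.
  by rewrite /c [bump _ _ == _]eq_sym (negbTE (neq_bump _ _)) bumpK.
- rewrite (bigD1_ord (Ordinal hi0)) //=.
  have -> : \sum_(i < n) c (lift (Ordinal hi0) i) * x (lift (Ordinal hi0) i) =
            \sum_(i < n) c' i * x (bump i0 i).
    apply: eq_bigr => i _; by rewrite /c /= [bump _ _ == _]eq_sym (negbTE (neq_bump _ _)) bumpK.
  move: hc'0; rewrite /x'.
  under eq_bigr do rewrite mulrBr.
  rewrite sumrB => /eqP; rewrite subr_eq0 => /eqP ->.
  rewrite /c eqxx mulNr mulr_suml; under [in X in _ + X]eq_bigr do rewrite mulrA.
  by rewrite addNr.
Qed.

Lemma ex_max n (f : nat -> R) : (0 < n)%N ->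
  exists2 j, (j < n)%N & forall i, (i < n)%N -> f i <= f j.
Proof.
elim: n => [//|[|n] IH] _.
  by exists 0%N => // i; rewrite ltnS leqn0 => /eqP ->.
have [j hj hmax] := IH isT.
have [hle|hlt] := leP (f n.+1) (f j).
  exists j; first exact: ltnW.
  move=> i; rewrite ltnS leq_eqVlt => /orP [/eqP ->|hi] //; exact: hmax.
exists n.+1 => // i; rewrite ltnS leq_eqVlt => /orP [/eqP ->|hi] //.
apply: le_trans (hmax _ hi) _; exact: ltW.
Qed.

Lemma abs_sum_max n (a : nat -> C) j : (j < n)%N -> 0 < abs (a j) ->
  (forall i, (i < n)%N -> i != j -> abs (a i) < abs (a j)) ->
  abs (\sum_(i < n) a i) = abs (a j).
Proof.
move=> hj hpos hlt; rewrite (bigD1_ord (Ordinal hj)) //= abs_strict //.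
apply: (@abs_sum_lt _ (fun i => a (bump j i))) => // i hi.
apply: hlt; last by rewrite eq_sym neq_bump.
move: hi; case: n hj => // n hj hi.
rewrite /bump; case: (j <= i)%N; by rewrite ?add1n ?add0n // ltnW.
Qed.

Lemma pz_div (a b : int) : abs pi ^ a / abs pi ^ b = abs pi ^ (a - b).
Proof.
have h0 : abs pi != 0 by rewrite gt_eqF.
by rewrite invr_expz -expfzDr.
Qed.

Variable bs : seq C.
Hypothesis hspan : forall x, x \in L -> span bs x.
Hypothesis Kdisc : forall x, x \in K -> x != 0 -> exists n : int, abs x = abs pi ^ n.

Lemma value_group x : x \in L -> x != 0 ->
  exists M (n : int), (0 < M)%N /\ abs x ^+ M = abs pi ^ n.
Proof.
move=> hx hx0; case: (pselect (exists M (n : int), (0 < M)%N /\ abs x ^+ M = abs pi ^ n)) => // H.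
exfalso.
set X := abs x.
have hX : X != 0 by rewrite gt_eqF // abs_gt0.
have helper : forall i j (ni nj : int), (i < j)%N ->
    abs pi ^ ni * X ^+ i = abs pi ^ nj * X ^+ j -> False.
  move=> i j ni nj hij he; apply: H; exists (j - i)%N, (ni - nj); split; first by rewrite subn_gt0.
  have hXi : X ^+ i != 0 by exact: expf_neq0.
  have e2 : X ^+ j = X ^+ i * X ^+ (j - i) by rewrite -exprD subnKC // ltnW.
  have he' : X ^+ i * abs pi ^ ni = X ^+ i * (abs pi ^ nj * X ^+ (j - i)).
    by rewrite mulrC he e2 mulrCA.
  have {he} he := mulfI hXi he'.
  by rewrite -pz_div he mulrC mulKf // expfz_neq0 // gt_eqF.
have [c [hcK [i1 hi1 hc1] hc0]] := @steinitz bs (size bs).+1 (fun i => x ^+ i) (leqnn _)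
   (fun i _ => hspan _ (sfX L x i HLf hx)).
set a := fun i => c i * x ^+ i.
have [j hj hmax] := @ex_max (size bs).+1 (fun i => abs (a i)) isT.
have hpos1 : 0 < abs (a i1) by rewrite abs_gt0 // mulf_neq0 // expf_neq0.
have hpos : 0 < abs (a j) := lt_le_trans hpos1 (hmax _ hi1).
have ha : forall i, 0 < abs (a i) -> exists n : int, abs (a i) = abs pi ^ n * X ^+ i.
  move=> i hi; have hci : c i != 0.
    by apply/eqP => h; move: hi; rewrite /a h mul0r abs0 ltxx.
  have [n hn] := Kdisc _ (hcK i) hci; exists n; by rewrite absM hn absX.
have hstrict : forall i, (i < (size bs).+1)%N -> i != j -> abs (a i) < abs (a j).
  move=> i hi hij; rewrite lt_neqAle hmax // andbT; apply/negP => /eqP he.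
  have hpi : 0 < abs (a i) by rewrite he.
  have [ni hni] := ha i hpi; have [nj hnj] := ha j hpos.
  move: he; rewrite hni hnj => he.
  case: (ltngtP i j) => hij'.
  - exact: helper hij' he.
  - exact: helper hij' (esym he).
  - by rewrite hij' eqxx in hij.
have := @abs_sum_max _ a _ hj hpos hstrict.
have -> : \sum_(i < (size bs).+1) a i = 0 by exact: hc0.
rewrite abs0 => h0; move: hpos; by rewrite -h0 ltxx.
Qed.

Variable sr : seq C.
Hypothesis hsr1 : forall r, r \in sr -> r \in K /\ abs r <= 1.
Hypothesis hsr2 : forall x, x \in K -> abs x <= 1 -> exists2 r, r \in sr & abs (x - r) < 1.

Definition RI (w : seq C) : Prop :=
  (forall z, z \in w -> z \in L /\ abs z <= 1) /\
  forall c : nat -> C, (forall i, c i \in K /\ abs (c i) <= 1) ->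
    (exists2 i, (i < size w)%N & abs (c i) = 1) ->
    1 <= abs (\sum_(i < size w) c i * w`_i).

Lemma RI_size w : RI w -> (size w <= size bs)%N.
Proof.
move=> [hw hRI]; rewrite leqNgt; apply/negP => hlt.
have hwL : forall i, (i < size w)%N -> span bs w`_i.
  move=> i hi; apply: hspan; exact: (proj1 (hw _ (mem_nth 0 hi))).
have [c [hcK [i1 hi1 hc1] hc0]] := @steinitz bs (size w) (fun i => w`_i) hlt hwL.
have [j hj hmax] := @ex_max (size w) (fun i => abs (c i)) (leq_ltn_trans (leq0n _) hlt).
have hpos : 0 < abs (c j) := lt_le_trans (abs_gt0 _ hc1) (hmax _ hi1).
have hcj : c j != 0 by apply/eqP => h; move: hpos; rewrite h abs0 ltxx.
pose c' := fun i => if (i < size w)%N then c i / c j else 0.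
have := hRI c'.
have -> : \sum_(i < size w) c' i * w`_i = 0.
  rewrite /c'; under eq_bigr => i _ do rewrite ltn_ord mulrAC.
  by rewrite -mulr_suml hc0 mul0r.
rewrite abs0 ler10 => h; suff : false by []; apply: h.
- move=> i; rewrite /c'; case: ifP => hi; last by rewrite sf0 // abs0 ler01.
  split; first by apply: sfM => //; apply: sfV.
  by rewrite absM absV ler_pdivrMr // mul1r hmax.
- by exists j => //; rewrite /c' hj absM absV mulfV // gt_eqF.
Qed.

Lemma RI_nil : RI [::].
Proof. split => // c _ [i]; by rewrite ltn0. Qed.

Lemma RI_max : exists w, RI w /\ forall w', RI w' -> (size w' <= size w)%N.
Proof.
pose P := fun k => `[< exists w, RI w /\ size w = k >].
have exP : exists k, P k by exists 0%N; apply/asboolP; exists [::]; split => //; exact: RI_nil.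
have ubP : forall k, P k -> (k <= size bs)%N.
  by move=> k /asboolP [w [hw <-]]; exact: RI_size.
case: (ex_maxnP exP ubP) => k /asboolP [w [hw hk]] hmax.
exists w; split => // w' hw'; rewrite hk; apply: hmax; apply/asboolP; by exists w'.
Qed.

Lemma approx w : RI w -> (forall w', RI w' -> (size w' <= size w)%N) ->
  forall z, z \in L -> abs z <= 1 -> exists r : nat -> C,
    (forall i, r i \in sr) /\ abs (z - \sum_(i < size w) r i * w`_i) < 1.
Proof.
move=> hw hmax z hz hz1.
have nRI : ~ RI (rcons w z).
  by move/hmax; rewrite size_rcons ltnn.
have hel : forall y, y \in rcons w z -> y \in L /\ abs y <= 1.
  move=> y; rewrite mem_rcons in_cons => /orP [/eqP ->|hy] //; exact: (proj1 hw).
have [c hc] : exists c : nat -> C, ~ ((forall i, c i \in K /\ abs (c i) <= 1) ->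
    (exists2 i, (i < size (rcons w z))%N & abs (c i) = 1) ->
    1 <= abs (\sum_(i < size (rcons w z)) c i * (rcons w z)`_i)).
  apply/existsNP => H; apply: nRI; by split.
move/not_implyP: hc => [hcK /not_implyP [[i0 hi0 hci0] hlt]].
move: hlt; rewrite size_rcons big_ord_recr /= nth_rcons ltnn eqxx.
have -> : \sum_(i < size w) c i * (rcons w z)`_i = \sum_(i < size w) c i * w`_i.
  by apply: eq_bigr => i _; rewrite nth_rcons ltn_ord.
move/negP; rewrite -ltNge => hT.
set T := \sum_(i < size w) c i * w`_i + c (size w) * z in hT.
have [hcn|hcn] := ltP (abs (c (size w))) 1.
  exfalso.
  have hi0' : (i0 < size w)%N.
    rewrite ltn_neqAle -ltnS -(size_rcons w z) hi0 andbT; apply/negP => /eqP he.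
    by move: hcn; rewrite -he hci0 ltxx.
  have := (proj2 hw) c hcK (ex_intro2 _ _ i0 hi0' hci0).
  have -> : \sum_(i < size w) c i * w`_i = T - c (size w) * z by rewrite addrK.
  rewrite leNgt => /negP; apply; apply: absD_lt => //.
  rewrite absN absM; apply: le_lt_trans (ler_wpM2l (abs_ge0 _) hz1) _; by rewrite mulr1.
set n := size w in hT hcn hmax *.
set cn := c n in hT hcn *.
have hcn1 : abs cn = 1 by apply/eqP; rewrite eq_le hcn (proj2 (hcK n)).
have hcn0 : cn != 0 by apply/eqP => h; move: hcn1; rewrite h abs0 => /eqP; rewrite eq_sym oner_eq0.
pose e := fun i => - c i / cn.
have heK : forall i, e i \in K /\ abs (e i) <= 1.
  move=> i; split; first by apply: sfM => //; [apply: sfN => //; exact: (proj1 (hcK i)) | apply: sfV => //; exact: (proj1 (hcK n))].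
  by rewrite /e absM absN absV hcn1 invr1 mulr1; exact: (proj2 (hcK i)).
have hr : forall i, exists r, r \in sr /\ abs (e i - r) < 1.
  move=> i; have [r hr1 hr2] := hsr2 _ (proj1 (heK i)) (proj2 (heK i)); by exists r.
have [r hrr] := choice hr.
exists r; split => [i|]; first exact: (proj1 (hrr i)).
have hsum : \sum_(i < n) e i * w`_i = - ((\sum_(i < n) c i * w`_i) / cn).
  rewrite mulr_suml -sumrN; apply: eq_bigr => i _; by rewrite /e !mulNr mulrAC.
have hze : z - \sum_(i < n) e i * w`_i = T / cn.
  rewrite hsum opprK /T mulrDl addrC; congr (_ + _).
  by rewrite mulrAC mulfV // mul1r.
have -> : z - \sum_(i < n) r i * w`_i =
    (z - \sum_(i < n) e i * w`_i) + \sum_(i < n) (e i - r i) * w`_i.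
  have hB : \sum_(i < n) (e i - r i) * w`_i =
      \sum_(i < n) e i * w`_i - \sum_(i < n) r i * w`_i.
    by rewrite -sumrB; apply: eq_bigr => i _; rewrite mulrBl.
  by rewrite hB addrA subrK.
apply: absD_lt.
  by rewrite hze absM absV hcn1 invr1 mulr1.
apply: (@abs_sum_lt _ (fun i => (e i - r i) * w`_i)) => // i hi.
rewrite absM; apply: le_lt_trans (ler_wpM2l (abs_ge0 _) (proj2 ((proj1 hw) _ (mem_nth 0 hi)))) _.
by rewrite mulr1; exact: (proj2 (hrr i)).
Qed.

Fixpoint combos (w : seq C) : seq C :=
  if w is a :: w' then [seq r * a + t | r <- sr, t <- combos w'] else [:: 0].

Lemma combos_mem w (r : nat -> C) : (forall i, r i \in sr) ->
  \sum_(i < size w) r i * w`_i \in combos w.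
Proof.
elim: w r => [|a w IH] r hr /=; first by rewrite big_ord0 mem_head.
rewrite big_ord_recl /=.
have := IH (fun i => r i.+1) (fun i => hr _).
move=> h; exact: (allpairs_f (fun r t => r * a + t) (hr 0%N) h).
Qed.

Lemma pigeon (g : nat -> nat) m : (forall i, (i <= m)%N -> (g i < m)%N) ->
  exists i j, [/\ (i < j)%N, (j <= m)%N & g i = g j].
Proof.
move=> hg; case: (pselect (exists i j, [/\ (i < j)%N, (j <= m)%N & g i = g j])) => // H.
exfalso.
have hu : uniq (map g (iota 0 m.+1)).
  rewrite map_inj_in_uniq ?iota_uniq // => a b; rewrite !mem_iota !add0n !ltnS => ha hb he.
  case: (ltngtP a b) => // hab; exfalso; apply: H.
    by exists a, b; split.
  by exists b, a; split.
have := uniq_leq_size hu (s2 := iota 0 m).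
rewrite size_map !size_iota ltnn => h; suff : false by []; apply: h.
move=> v /mapP [i]; rewrite mem_iota add0n ltnS => hi ->; rewrite mem_iota add0n; exact: hg.
Qed.

Lemma unit_pow y : y \in L -> abs y = 1 -> exists M, (0 < M)%N /\ U (y ^+ M).
Proof.
move=> hy hy1.
have [w [hw hmax]] := RI_max.
set F := combos w.
pose P := fun i => (fun f => abs (y ^+ i - f) < 1).
have hhas : forall i, has (P i) F.
  move=> i; have hyi : abs (y ^+ i) <= 1 by rewrite absX hy1 expr1n.
  have [r [hr hr2]] := @approx w hw hmax _ (sfX L y i HLf hy) hyi.
  apply/hasP; exists (\sum_(j < size w) r j * w`_j) => //; exact: combos_mem.
pose g := fun i => find (P i) F.
have [i [j [hij hj hg]]] := @pigeon g (size F) (fun i _ => (etrans (esym (has_find _ _)) (hhas i))).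
have h1 := nth_find 0 (hhas i); have h2 := nth_find 0 (hhas j).
have e1 : find (P i) F = find (P j) F := hg.
rewrite e1 in h1.
move: h1 h2; set f := F`_(find (P j) F); rewrite /P /= => h1 h2.
have h3 : abs (y ^+ i - y ^+ j) < 1.
  have -> : y ^+ i - y ^+ j = (y ^+ i - f) + - (y ^+ j - f) by rewrite opprB addrA subrK.
  by apply: absD_lt; rewrite ?absN.
exists (j - i)%N; split; first by rewrite subn_gt0.
have hj' : j = (i + (j - i))%N by rewrite subnKC // ltnW.
move: h3; rewrite [in y ^+ j]hj' exprD -{1}(mulr1 (y ^+ i)) -mulrBr absM absX hy1 expr1n mul1r.
by rewrite /U absB.
Qed.

Lemma fact1_proof x : x \in L -> x != 0 ->
  exists N (k : int) u, [/\ (0 < N)%N, U u & x ^+ N = pi ^ k * u].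
Proof.
move=> hx hx0.
have [M [n [hM hxM]]] := value_group _ hx hx0.
have hpn : pi ^ n != 0 by rewrite expfz_neq0 // pi_neq0.
set y := x ^+ M / pi ^ n.
have hyL : y \in L.
  apply: sfM => //; first exact: sfX.
  apply: sfV => //; apply: HKL; exact: sfXz.
have hy1 : abs y = 1.
  rewrite absM absV absX abs_exprz hxM mulfV // expfz_neq0 // gt_eqF //.
have [M' [hM' hU]] := unit_pow _ hyL hy1.
exists (M * M')%N, (n * M'%:Z), (y ^+ M'); split => //; first by rewrite muln_gt0 hM.
rewrite exprM.
have -> : x ^+ M = pi ^ n * y by rewrite /y mulrC divfK.
rewrite exprMn; congr (_ * _); by rewrite exprnP exprz_exp.
Qed.

Lemma Zp_mod y m n : Zp_elt p y -> (m <= n)%N -> (y n %% p ^ m)%N = y m.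
Proof.
move=> hy /subnK <-; elim: (n - m)%N => [|d IH].
  by rewrite add0n modn_small //; case: (hy m).
rewrite addSn -IH; have [_ h] := hy (d + m)%N.
by rewrite -h modn_dvdm // dvdn_exp2l // leq_addl.
Qed.

Lemma U1pi : U (1 + pi).
Proof. by rewrite /U (addrC 1) addrK. Qed.

Lemma padic_key (y : nat -> nat) : Zp_elt p y ->
  padic_pow_is abs (1 + pi) y (1 + pi) -> forall m, (0 < m)%N -> y m = 1%N.
Proof.
move=> hy hc m hm; apply/eqP; apply/negPn/negP => hym.
have hp1 : (1 < p)%N := prime_gt1 pp.
have hpm : (1 < p ^ m)%N by rewrite -(expn0 p) ltn_exp2l.
set e := abs pi ^+ (p ^ m).
have he : 0 < e by rewrite exprn_gt0.
have [N0 hN0] := hc e he.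
set n := maxn N0 m.
have h := hN0 n (leq_maxl _ _).
have hmod := @Zp_mod y m n hy (leq_maxr N0 m).
move: h hmod; rewrite -/n; case: (y n) => [|b] h hmod.
  move: h; rewrite expr0 opprD addrA subrr add0r absN ltNge.
  by rewrite ler_iXnr ?expn_gt0 ?prime_gt0 ?abs_ge0 ?ltW.
have hnd : ~~ (p ^ m %| b)%N.
  apply/negP => hd; move: hmod; rewrite -addn1 -modnDml.
  rewrite (eqP hd) add0n modn_small // => h1; by rewrite -h1 eqxx in hym.
have hb : (0 < b)%N by rewrite lt0n; apply/negP => /eqP hb0; move: hnd; rewrite hb0 dvdn0.
have [c hc' hbe] := pfactor_coprime pp hb.
set j := logn p b in hbe.
have hjm : (j < m)%N.
  rewrite ltnNge; apply/negP => hmj; apply: (negP hnd).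
  rewrite hbe; apply: dvdn_mull; by rewrite dvdn_exp2l.
have h1 : (1 + pi) ^+ b.+1 - (1 + pi) = (1 + pi) * ((1 + pi) ^+ b - 1).
  by rewrite mulrBr mulr1 -exprS.
have h2 : (1 + pi) ^+ b = (1 + pi ^+ (p ^ j)) ^+ c.
  by rewrite hbe mulnC exprM exprDn_pchar ?pnat_pj // expr1n.
have hU : U (1 + pi ^+ (p ^ j)).
  rewrite /U (addrC 1) addrK absX exprn_ilt1 ?abs_ge0 //.
  by rewrite -lt0n expn_gt0 prime_gt0.
have ht1 : (1 + pi ^+ (p ^ j)) - 1 = pi ^+ (p ^ j) by rewrite (addrC 1) addrK.
have h3 : abs ((1 + pi) ^+ b.+1 - (1 + pi)) = abs pi ^+ (p ^ j).
  rewrite h1 absM (U_abs _ U1pi) mul1r h2 subrX1 absM ht1 absX.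
  rewrite geo_abs ?mulr1 //; by rewrite -prime_coprime.
move: h; rewrite h3 ltNge; apply/negP/negPn.
apply: ler_wiXn2l; rewrite ?abs_ge0 ?ltW //.
by rewrite leq_exp2l // ltnW.
Qed.

Lemma in_S_id s' : in_S abs p L s' -> (forall u, one_unit_in abs K u -> s' u = u) ->
  forall u, one_unit_in abs L u -> s' u = u.
Proof.
move=> [_ [y [hy hpow]]] hK u hu.
have h1K : 1 + pi \in K by apply: sfD => //; exact: sf1.
have h1 : one_unit_in abs K (1 + pi) by split => //; exact: U1pi.
have h1L : one_unit_in abs L (1 + pi) by split; [exact: HKL | exact: U1pi].
have hp1 : padic_pow_is abs (1 + pi) y (1 + pi).
  have := hpow _ h1L; by rewrite (hK _ h1).
have hy1 := padic_key y hy hp1.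
have [//|hne] := eqVneq (s' u) u.
have he : 0 < abs (u - s' u) by apply: abs_gt0; rewrite subr_eq0 eq_sym.
have [N0 hN0] := hpow u hu _ he.
have := hN0 N0.+1 (leqnSn _); rewrite hy1 // expr1 ltxx. done.
Qed.

Lemma char_pow s' x n : char_Lplus L s' -> x \in L -> x != 0 -> s' (x ^+ n.+1) = s' x ^+ n.+1.
Proof.
move=> [_ hM _] hx hx0; elim: n => [|n IH]; first by rewrite !expr1.
rewrite exprS hM ?IH -?exprS //; [exact: sfX | exact: expf_neq0].
Qed.


Lemma Q_ex x : x \in L -> x != 0 -> exists w, Q x w.
Proof.
move=> hx hx0; have [N [k [u [hN hu hxu]]]] := fact1_proof _ hx hx0.
have [w [hw hwu]] := U_root_exists _ _ hu hN.
exists w; split => //; exists N, k; by rewrite hwu.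
Qed.

Theorem main_given : exists s : C -> C,
    [/\ in_S abs p L s, extends_angle abs K pi s, values_in_one_units abs L s
      & forall s' : C -> C,
          in_S abs p L s' -> extends_angle abs K pi s' ->
          values_in_one_units abs L s' ->
          forall x, x \in L -> x != 0 -> s' x = s x].
Proof.
exists sdef; split.
- split.
  + split.
    * move=> x hx hx0; have [w hw] := Q_ex _ hx hx0; rewrite (sdefE _ _ hw).
      exact: U_neq0 (proj1 hw).
    * move=> x y hx hy hx0 hy0.
      have [w hw] := Q_ex _ hx hx0; have [v hv] := Q_ex _ hy hy0.
      by rewrite (sdefE _ _ hw) (sdefE _ _ hv) (sdefE _ _ (Q_mul _ _ _ _ hw hv)).
    * move=> z [hz [n [hn hzn]]]; exact: sdefE _ _ (Q_root _ _ hn hzn).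
  + exists (fun n => if n is 0 then 0 else 1)%N; split.
    * case=> [|n] /=; first by rewrite expn0.
      split; first by rewrite -(expn0 p) ltn_exp2l // prime_gt1.
      by rewrite modn_small // -(expn0 p) ltn_exp2l // prime_gt1.
    * move=> u [hu hUu] e he; exists 1%N => n hn.
      rewrite (sdefE _ _ (Q_U _ hUu)); case: n hn => // n _.
      by rewrite expr1 subrr abs0.
- move=> alpha n zeta u hal [hz [m [hm hzm]]] [hu hUu] ->.
  exact: sdefE _ _ (Q_angle n _ _ _ hm hzm hUu).
- move=> x hx hx0; have [w hw] := Q_ex _ hx hx0; rewrite (sdefE _ _ hw); exact: (proj1 hw).
- move=> s' hS hA hV x hx hx0.
  have [w hw] := Q_ex _ hx hx0; rewrite (sdefE _ _ hw).
  have [hUw [N [k [hN hxN]]]] := hw.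
  have hpk : pi ^ k \in K by exact: sfXz.
  have hpk0 : pi ^ k != 0 by rewrite expfz_neq0 // pi_neq0.
  have hu0 : w ^+ N != 0 by rewrite expf_neq0 // U_neq0.
  have huL : w ^+ N \in L.
    have -> : w ^+ N = (pi ^ k)^-1 * x ^+ N by rewrite hxN mulrA mulVf // mul1r.
    by apply: sfM => //; [apply: HKL; exact: sfV | exact: sfX].
  have hs1 : s' (pi ^ k) = 1.
    apply: (hA _ k 1 1 hpk); last by rewrite !mulr1.
      split; [exact: sf1 | by exists 1%N; rewrite expr1].
    split; [exact: sf1 | by rewrite subrr abs0].
  have hsu : s' (w ^+ N) = w ^+ N.
    apply: (in_S_id _ hS) => //.
      move=> u hu; have hr1 : root_of_unity_in K 1.
        split; [exact: sf1 | by exists 1%N; rewrite expr1].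
      apply: (hA _ 0 1 u (proj1 hu) hr1 hu); by rewrite expr0z !mul1r.
    by split => //; exact: UX.
  have hxs : s' x ^+ N = w ^+ N.
    case: N hN hxN hu0 huL hsu => // N _ hxN hu0 huL hsu.
    rewrite -(char_pow s' x N (proj1 hS)) // hxN.
    case: (proj1 hS) => _ hM _; rewrite hM //; last exact: HKL.
    by rewrite hs1 mul1r.
  exact: U_root_uniq (hV x hx hx0) hUw hN hxs.
Qed.
End P.

Theorem proposition2p8 (R : realType) (C : closedFieldType) (abs : C -> R)
    (p : nat) (K L : {pred C}) (pi : C) :
  prime p -> p \in [pchar C] ->
  nonarch_abs abs ->
  local_field_with_unif abs K pi ->
  completed_alg_closure abs K ->
  finite_ext K L ->
  exists s : C -> C,
    [/\ in_S abs p L s, extends_angle abs K pi s, values_in_one_units abs L s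
      & forall s' : C -> C,
          in_S abs p L s' -> extends_angle abs K pi s' ->
          values_in_one_units abs L s' ->
          forall x, x \in L -> x != 0 -> s' x = s x].
Proof.
move=> pp pc Habs [HKf [_ [piK [pi0 [pi1 [Kdisc [sr [_ hsr2]]]]]]]] _ [HLf HKL [bs [_ hspan]]].
exact: (@main_given R C abs Habs p pp pc K L pi HKf HLf HKL piK pi0 pi1 bs hspan Kdisc sr hsr2).
Qed.
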